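(* Let $S$ be a range set with countable coinitiality, and let $X$ be an ultrametrizable topological space. Then $X$ is compact if and only if the set of all doubling metrics in $\mathrm{Ult}(X,S)$ is a dense $F_{\sigma}$ subset of $(\mathrm{Ult}(X,S),\mathcal{UD}_X^S)$.
   Context: A range set is a subset $S\subseteq[0,\infty)$ with $0\in S$. $S$ has countable coinitiality if there is a strictly decreasing sequence in $S$ converging to $0$. A metric $d$ on $X$ is $S$-valued if $d(X^2)\subseteq S$; an ultrametric is a metric satisfying $d(x,y)\le \max\{d(x,z),d(z,y)\}$ for all $x,y,z$. $\mathrm{Ult}(X,S)$ is the set of all $S$-valued ultrametrics on $X$ generating the topology of $X$. $\mathcal{UD}_X^S(d,e)$ is the infimum of all $\epsilon\in S\cup\{\infty\}$ such that for all $x,y\in X$, $d(x,y)\le\max\{e(x,y),\epsilon\}$ and $e(x,y)\le\max\{d(x,y),\epsilon\}$; this is an ultrametric on $\mathrm{Ult}(X,S)$ (possibly taking value $\infty$), and $\mathrm{Ult}(X,S)$ carries its topology. For a metric space $(X,d)$ and $A\subseteq X$, $\delta_d(A)$ is the diameter and $\alpha_d(A)=\inf\{d(x,y):x\ne y,\ x,y\in A\}$; $(X,d)$ is doubling if there exist $\beta\in(0,\infty)$, $C\in[1,\infty)$ with $\mathrm{card}(A)\le C(\delta_d(A)/\alpha_d(A))^\beta$ for every finite $A\subseteq X$ with at least two points. $F_\sigma$ means a countable union of closed sets. *)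

(* Defs.v *)
From HB Require Import structures.
From mathcomp Require Import all_boot all_order all_algebra.
From mathcomp Require Import all_classical all_reals all_analysis.
Set Implicit Arguments. Unset Strict Implicit. Unset Printing Implicit Defensive.
Import Order.TTheory GRing.Theory Num.Theory.
Local Open Scope classical_set_scope.
Local Open Scope ring_scope.
Import numFieldNormedType.Exports.

Section Defs.
Variable R : realType.

Definition range_set (S : set R) : Prop := S 0 /\ S `<=` [set x | 0 <= x].

Definition countable_coinitiality (S : set R) : Prop :=
  exists u : nat -> R, (forall n, S (u n)) /\ (forall n, u n.+1 < u n) /\
    u @ \oo --> (0 : R^o).

Variable X : topologicalType.

Definition is_metric (d : X -> X -> R) : Prop :=
  [/\ forall x y, 0 <= d x y,
      forall x y, d x y = 0 <-> x = y,
      forall x y, d x y = d y x &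
      forall x y z, d x y <= d x z + d z y].

Definition is_ultrametric (d : X -> X -> R) : Prop :=
  is_metric d /\ forall x y z, d x y <= Num.max (d x z) (d z y).

Definition generates_topology (d : X -> X -> R) : Prop :=
  forall A : set X, open A <->
    (forall x, A x -> exists2 r : R, 0 < r & [set y | d x y < r] `<=` A).

Definition S_valued (S : set R) (d : X -> X -> R) : Prop :=
  forall x y, S (d x y).

Definition ultrametrizable : Prop :=
  exists d : X -> X -> R, is_ultrametric d /\ generates_topology d.

Definition Ult (S : set R) : set (X -> X -> R) :=
  [set d | S_valued S d /\ is_ultrametric d /\ generates_topology d].

(* UD_X^S(d, e): infimum over S u {oo} of admissible eps (empty inf = +oo) *)
Definition UD (S : set R) (d e : X -> X -> R) : \bar R :=
  ereal_inf [set eps%:E | eps in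
    [set eps | S eps /\ forall x y, d x y <= Num.max (e x y) eps /\
                                    e x y <= Num.max (d x y) eps]].

(* diameter and minimal distance of a finite set, given as a duplicate-free list *)
Definition diam (d : X -> X -> R) (s : seq X) : R :=
  \big[Num.max/0]_(x <- s) \big[Num.max/0]_(y <- s) d x y.

Definition sep (d : X -> X -> R) (s : seq X) : R :=
  inf [set r | exists x y, [/\ x \in s, y \in s, x <> y & r = d x y]].

Definition doubling (d : X -> X -> R) : Prop :=
  exists beta C : R, 0 < beta /\ 1 <= C /\
    forall s : seq X, uniq s -> (1 < size s)%N ->
      (size s)%:R <= C * powR (diam d s / sep d s) beta.

Definition UD_dense_in_Ult (S : set R) (A : set (X -> X -> R)) : Prop :=
  A `<=` Ult S /\
  forall d, Ult S d -> forall r : R, 0 < r -> exists2 e, A e & (UD S d e < r%:E)%E.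

Definition UD_closed_in_Ult (S : set R) (F : set (X -> X -> R)) : Prop :=
  F `<=` Ult S /\
  forall d, Ult S d ->
    (forall r : R, 0 < r -> exists2 e, F e & (UD S d e < r%:E)%E) -> F d.

Definition UD_Fsigma_in_Ult (S : set R) (A : set (X -> X -> R)) : Prop :=
  exists F : nat -> set (X -> X -> R),
    (forall n, UD_closed_in_Ult S (F n)) /\ A = \bigcup_n F n.

End Defs.

(* Main.v *)
Require Import Defs.
From HB Require Import structures.
From mathcomp Require Import all_boot all_order all_algebra.
From mathcomp Require Import all_classical all_reals all_analysis.
From mathcomp Require Import zify.
Set Implicit Arguments. Unset Strict Implicit. Unset Printing Implicit Defensive.
Import Order.TTheory GRing.Theory Num.Theory.
Local Open Scope classical_set_scope.
Local Open Scope ring_scope.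

Section Seqs.
Variable R : realType.

Lemma cvg0_small (u : nat -> R) : u @ \oo --> (0 : R^o) ->
  forall r : R, 0 < r -> exists N, forall n, (N <= n)%N -> `|u n| < r.
Proof.
move=> /cvgrPdist_lt H r r0; have := H r r0.
move=> [N _ HN]; exists N => n Nn; have := HN n Nn.
by rewrite sub0r normrN.
Qed.

Variable u : nat -> R.
Hypothesis hu : forall n, u n.+1 < u n.

Lemma sdec_lt m n : (m < n)%N -> u n < u m.
Proof.
elim: n => // n IH; rewrite ltnS leq_eqVlt => /orP [/eqP -> | /IH h].
  exact: hu.
exact: lt_trans (hu n) h.
Qed.

Lemma sdec_le m n : (m <= n)%N -> u n <= u m.
Proof. by rewrite leq_eqVlt => /orP [/eqP -> // | /sdec_lt /ltW]. Qed.

Lemma sdec_ltE m n : u n < u m -> (m < n)%N.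
Proof. by case: (leqP n m) => // /sdec_le h1 h2; move: (le_lt_trans h1 h2); rewrite ltxx. Qed.

Lemma sdec_leE m n : u n <= u m -> (m <= n)%N.
Proof. by case: (leqP m n) => // /sdec_lt h1 h2; move: (lt_le_trans h1 h2); rewrite ltxx. Qed.

End Seqs.

Lemma sup_ub (R : realType) (E : set R) x : has_sup E -> E x -> x <= sup E.
Proof. by move=> h Ex; apply: (sup_upper_bound h). Qed.

Section Ultra.
Variables (R : realType) (X : topologicalType).
Implicit Types (d e : X -> X -> R).

Lemma um_ge0 d : is_ultrametric d -> forall x y, 0 <= d x y.
Proof. by case=> -[]. Qed.
Lemma um_eq0 d : is_ultrametric d -> forall x y, d x y = 0 <-> x = y.
Proof. by case=> -[]. Qed.
Lemma um_sym d : is_ultrametric d -> forall x y, d x y = d y x.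
Proof. by case=> -[]. Qed.
Lemma um_max d : is_ultrametric d -> forall x y z, d x y <= Num.max (d x z) (d z y).
Proof. by case. Qed.
Lemma um_xx d : is_ultrametric d -> forall x, d x x = 0.
Proof. by move=> h x; apply/(um_eq0 h). Qed.
Lemma um_gt0 d : is_ultrametric d -> forall x y, x <> y -> 0 < d x y.
Proof.
move=> h x y xy; rewrite lt_neqAle um_ge0 // andbT; apply/eqP => /esym/(um_eq0 h).
exact: xy.
Qed.

Lemma um_lt d x y z r : is_ultrametric d -> d x z < r -> d z y < r -> d x y < r.
Proof. by move=> h h1 h2; apply: le_lt_trans (um_max h x y z) _; rewrite gt_max h1 h2. Qed.

Lemma um_ball d x y r : is_ultrametric d -> d x y < r -> forall z, (d x z < r) <-> (d y z < r).
Proof.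
move=> h hxy z; split => hz.
  by apply: (um_lt h) hz; rewrite um_sym.
exact: (um_lt h) hxy hz.
Qed.

Lemma mk_ultrametric d :
  (forall x y, 0 <= d x y) -> (forall x y, d x y = 0 <-> x = y) ->
  (forall x y, d x y = d y x) -> (forall x y z, d x y <= Num.max (d x z) (d z y)) ->
  is_ultrametric d.
Proof.
move=> h0 h1 h2 h3; split => //; split => // x y z.
apply: le_trans (h3 x y z) _; rewrite ge_max; apply/andP; split.
  by rewrite lerDl.
by rewrite lerDr.
Qed.

Lemma gen_transfer d e : generates_topology d ->
  (forall x r, 0 < r -> exists2 r', 0 < r' & forall y, d x y < r' -> e x y < r) ->
  (forall x r, 0 < r -> exists2 r', 0 < r' & forall y, e x y < r' -> d x y < r) ->
  generates_topology e.
Proof.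
move=> hd h1 h2 A; rewrite hd; split => H x Ax.
  have [r r0 hr] := H x Ax; have [r' r'0 hr'] := h2 x r r0.
  by exists r' => // y /hr' /hr.
have [r r0 hr] := H x Ax; have [r' r'0 hr'] := h1 x r r0.
by exists r' => // y /hr' /hr.
Qed.

Lemma uopen_ball d x r : is_ultrametric d -> generates_topology d ->
  0 < r -> open [set y | d x y < r].
Proof.
move=> hu hg r0; apply/hg => y /= hy; exists r => // z /= hz.
exact: (um_lt hu) hy hz.
Qed.

Lemma unbhs_ball d x B : is_ultrametric d -> generates_topology d ->
  nbhs x B -> exists2 r, 0 < r & [set y | d x y < r] `<=` B.
Proof.
move=> hu hg; rewrite nbhsE /= ; move=> [U [oU Ux] UB].
have [r r0 hr] := (hg U).1 oU x Ux; exists r => //; exact: subset_trans UB.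
Qed.

Lemma uball_nbhs d x r : is_ultrametric d -> generates_topology d ->
  0 < r -> nbhs x [set y | d x y < r].
Proof.
move=> hu hg r0; apply: open_nbhs_nbhs; split; first exact: uopen_ball.
by rewrite /= um_xx.
Qed.

End Ultra.

Section Fin.
Variable R : realType.

Lemma finite_pos_lb (l : seq R) : (forall x, x \in l -> 0 < x) ->
  exists2 m : R, 0 < m & forall x, x \in l -> m <= x.
Proof.
elim: l => [|a l IH] H; first by exists 1.
have [m m0 hm] : exists2 m : R, 0 < m & forall x, x \in l -> m <= x.
  by apply: IH => x xl; apply: H; rewrite inE xl orbT.
exists (Num.min a m).
  by rewrite lt_min m0 andbT; apply: H; rewrite inE eqxx.
move=> x; rewrite inE => /orP [/eqP -> | xl]; first by rewrite ge_min lexx.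
by rewrite ge_min (hm x xl) orbT.
Qed.
End Fin.

Section Sep.
Variables (R : realType) (X : topologicalType).
Implicit Types (d e : X -> X -> R) (s : seq X).

Lemma pairs_lb d s : (forall x y, x <> y -> 0 < d x y) ->
  exists2 m, 0 < m & forall x y, x \in s -> y \in s -> x <> y -> m <= d x y.
Proof.
move=> hpos.
pose l := [seq d p.1 p.2 | p <- [seq (x, y) | x <- s, y <- s] & p.1 != p.2].
have [m m0 hm] : exists2 m : R, 0 < m & forall x, x \in l -> m <= x.
  apply: finite_pos_lb => r /mapP [p]; rewrite mem_filter => /andP [/eqP hp _] ->.
  exact: hpos.
exists m => // x y xs ys xy; apply: hm; apply/mapP; exists (x, y) => //.
rewrite mem_filter /=; apply/andP; split; first by apply/eqP.
by apply/allpairsP; exists (x, y).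
Qed.

Definition sepset d s := [set r | exists x y, [/\ x \in s, y \in s, x <> y & r = d x y]].

Lemma sepset_n0 d s : uniq s -> (1 < size s)%N -> sepset d s !=set0.
Proof.
case: s => [|a [|b s]] //= /andP [abs _] _; exists (d a b); exists a, b; split.
- by rewrite inE eqxx.
- by rewrite !inE eqxx orbT.
- by move=> ab; move: abs; rewrite ab inE eqxx.
- by [].
Qed.

Lemma two_pts s : uniq s -> (1 < size s)%N -> exists x y, [/\ x \in s, y \in s & x <> y].
Proof.
move=> us ss; have := sepset_n0 (fun _ _ => 0 : R) us ss.
by move=> [r [x [y [xs ys xy _]]]]; exists x, y.
Qed.

Lemma sep_ge d s m : uniq s -> (1 < size s)%N ->
  (forall x y, x \in s -> y \in s -> x <> y -> m <= d x y) -> m <= sep d s.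
Proof.
move=> us ss hm; apply: lb_le_inf; first exact: sepset_n0.
by move=> r [x [y [xs ys xy ->]]]; apply: hm.
Qed.

Lemma sep_le d s x y : (forall x y, 0 <= d x y) -> x \in s -> y \in s -> x <> y ->
  sep d s <= d x y.
Proof.
move=> h0 xs ys xy; apply: ge_inf.
  by exists 0 => r [a [b [_ _ _ ->]]].
by exists x, y.
Qed.

Lemma diam_ge d s x y : x \in s -> y \in s -> d x y <= diam d s.
Proof.
move=> xs ys; rewrite /diam.
apply: (le_trans _ (le_bigmax_seq _ _ _ _ xs _)) => //.
exact: (le_bigmax_seq _ _ _ (fun y => d x y) ys).
Qed.

Lemma bigmax0_ge0 (T : Type) (s : seq T) (F : T -> R) : 0 <= \big[Num.max/0]_(x <- s) F x.
Proof.
elim: s => [|a s IH]; first by rewrite big_nil.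
by rewrite big_cons le_max IH orbT.
Qed.

Lemma diam_ge0 d s : 0 <= diam d s.
Proof. exact: bigmax0_ge0. Qed.

Lemma sep_pos d s : (forall x y, x <> y -> 0 < d x y) -> uniq s -> (1 < size s)%N ->
  0 < sep d s.
Proof.
move=> hp us ss; have [m m0 hm] := pairs_lb s hp.
exact: lt_le_trans m0 (sep_ge us ss hm).
Qed.

Lemma sep_le_diam d s : (forall x y, 0 <= d x y) -> uniq s -> (1 < size s)%N ->
  sep d s <= diam d s.
Proof.
move=> h0 us ss; have [x [y [xs ys xy]]] := two_pts us ss.
exact: le_trans (sep_le h0 xs ys xy) (diam_ge d xs ys).
Qed.

Lemma diam_eq d e s : (forall x y, x \in s -> y \in s -> d x y = e x y) -> diam d s = diam e s.
Proof.
move=> h; rewrite /diam; apply: eq_big_seq => x xs; apply: eq_big_seq => y ys; exact: h.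
Qed.

Lemma sep_eq d e s : (forall x y, x \in s -> y \in s -> x <> y -> d x y = e x y) ->
  sep d s = sep e s.
Proof.
move=> h; rewrite /sep; congr inf; apply/seteqP; split => r [x [y [xs ys xy ->]]];
  exists x, y; split => //; by rewrite h.
Qed.

End Sep.

Section DiamLe.
Variables (R : realType) (X : topologicalType).
Lemma diam_le (d : X -> X -> R) s M : 0 <= M ->
  (forall x y, x \in s -> y \in s -> d x y <= M) -> diam d s <= M.
Proof.
move=> M0 h; rewrite /diam big_seq; apply: (big_ind (fun v => v <= M)) => //.
  by move=> a b ha hb; rewrite ge_max ha hb.
move=> x xs; rewrite big_seq; apply: (big_ind (fun v => v <= M)) => //.
  by move=> a b ha hb; rewrite ge_max ha hb.
by move=> y ys; apply: h.
Qed.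
End DiamLe.

Section UDsec.
Variables (R : realType) (X : topologicalType).
Implicit Types (d e : X -> X -> R) (s : seq X) (S : set R).

Definition UDcond d e (eps : R) := forall x y, d x y <= Num.max (e x y) eps /\
                                    e x y <= Num.max (d x y) eps.

Lemma UD_lt S d e r : (UD S d e < r%:E)%E -> exists eps, [/\ S eps, eps < r & UDcond d e eps].
Proof.
move=> /ereal_inf_lt [y [eps [Seps hc] <-]]; rewrite lte_fin => er.
by exists eps.
Qed.

Lemma UD_le S d e eps : S eps -> UDcond d e eps -> (UD S d e <= eps%:E)%E.
Proof. by move=> Se hc; apply: ereal_inf_lbound; exists eps. Qed.

Lemma agree_gt (a b eps : R) : eps < a -> a <= Num.max b eps -> b <= Num.max a eps -> b = a.
Proof.
move=> ea h1 h2; have ma : Num.max a eps = a by apply/max_idPl; exact: ltW.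
rewrite ma in h2; apply/eqP; rewrite eq_le h2 /=.
move: h1; case: (leP eps b) => eb //.
by move=> /(lt_le_trans ea); rewrite ltxx.
Qed.

Definition dbl d (b c : R) := forall s, uniq s -> (1 < size s)%N ->
  (size s)%:R <= c * powR (diam d s / sep d s) b.

Definition Fn S (n : nat) := [set d | Ult S d /\ dbl d n.+1%:R n.+1%:R].

Lemma doubling_Fn S d : Ult S d -> doubling d <-> exists n, dbl d n.+1%:R n.+1%:R.
Proof.
move=> [_ [hu _]]; split; last first.
  by move=> [n hn]; exists n.+1%:R, n.+1%:R; split => //; rewrite ler1n.
move=> [b [c [b0 [c1 hd]]]].
pose n := maxn (Num.Def.archi_bound b) (Num.Def.archi_bound c).
have bn : b <= n.+1%:R.
  apply: ltW; apply: lt_le_trans (archi_boundP (ltW b0)) _.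
  by rewrite ler_nat; apply: leqW; exact: leq_maxl.
have cn : c <= n.+1%:R.
  apply: ltW; apply: lt_le_trans (archi_boundP (le_trans ler01 c1)) _.
  by rewrite ler_nat; apply: leqW; exact: leq_maxr.
exists n => s us ss; apply: le_trans (hd s us ss) _.
have sp : 0 < sep d s := sep_pos (um_gt0 hu) us ss.
have r1 : 1 <= diam d s / sep d s.
  by rewrite ler_pdivlMr // mul1r; apply: sep_le_diam => //; exact: um_ge0.
apply: ler_pM => //.
- exact: le_trans ler01 c1.
- exact: powR_ge0.
- exact: ler_powR.
Qed.

Lemma Fn_closed S n : UD_closed_in_Ult S (Fn S n).
Proof.
split; first by move=> d [].
move=> d Ud H; split => // s us ss.
have [_ [hu _]] := Ud.
have [m m0 hm] := pairs_lb s (um_gt0 hu).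
have [e [Ue he] /UD_lt [eps [_ em hc]]] := H m m0.
have [_ [hue _]] := Ue.
have agree : forall x y, x \in s -> y \in s -> x <> y -> e x y = d x y.
  move=> x y xs ys xy; have [c1 c2] := hc x y.
  by apply: agree_gt c1 c2; apply: lt_le_trans em (hm x y xs ys xy).
have -> : diam d s = diam e s.
  apply: diam_eq => x y xs ys; case: (pselect (x = y)) => [->|xy].
    by rewrite !um_xx.
  by rewrite agree.
have -> : sep d s = sep e s.
  by apply: sep_eq => x y xs ys xy; rewrite agree.
exact: he.
Qed.

Lemma Fsigma_all S : @UD_Fsigma_in_Ult R X S [set d | Ult S d /\ doubling d].
Proof.
exists (Fn S); split; first exact: Fn_closed.
apply/seteqP; split.
  move=> d [Ud /(doubling_Fn Ud) [n hn]]; by exists n.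
move=> d [n _ [Ud hn]]; split => //; apply/(doubling_Fn Ud); by exists n.
Qed.

End UDsec.

Section NC.
Variables (R : realType) (X : topologicalType).
Variable d : X -> X -> R.
Hypothesis hu : is_ultrametric d.
Hypothesis hg : generates_topology d.
Variable F : set_system X.
Hypothesis FF : ProperFilter F.
Hypothesis hcl : forall x, ~ cluster F x.

Definition admr x r := [/\ 0 < r, r <= 1 &
  exists A, F A /\ forall z, d x z < r -> ~ A z].

Lemma adm_ex x : exists r, admr x r.
Proof.
have [A [B [FA nB hAB]]] : exists A B, [/\ F A, nbhs x B & forall z, A z -> B z -> False].
  apply: contrapT => H; elim: (@hcl x) => A B FA nB; apply: contrapT => hne.
  apply: H; exists A, B; split => // z Az Bz; apply: hne; by exists z.
have [r r0 hr] := unbhs_ball hu hg nB.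
exists (Num.min r 1); split.
- by rewrite lt_min r0 ltr01.
- by rewrite ge_min lexx orbT.
- exists A; split => // z hz Az; apply: (hAB z Az); apply: hr.
  by apply: lt_le_trans hz _; rewrite ge_min lexx.
Qed.

Lemma adm_shift x y r : d x y < r -> admr x r -> admr y r.
Proof.
move=> hxy [r0 r1 [A [FA hA]]]; split => //; exists A; split => // z hz.
by apply: hA; apply/(um_ball hu hxy).
Qed.

Definition urel x y := exists r, admr x r /\ d x y < r / 2.

Lemma rel_refl x : urel x x.
Proof.
have [r hr] := adm_ex x; exists r; split; first exact: hr.
rewrite (um_xx hu); case: hr => r0 _ _; by rewrite divr_gt0.
Qed.

Lemma half_lt (r : R) : 0 < r -> r / 2 < r.
Proof. by move=> r0; rewrite ltr_pdivrMr // ltr_pMr // ltr1n. Qed.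

Lemma rel_sym x y : urel x y -> urel y x.
Proof.
move=> [r [hr hxy]]; exists r; split; last by rewrite um_sym.
have r0 : 0 < r by case: hr.
apply: adm_shift hr; apply: lt_trans hxy _; exact: half_lt.
Qed.

Lemma rel_trans x y z : urel x y -> urel y z -> urel x z.
Proof.
move=> [r1 [h1 hxy]] [r2 [h2 hyz]].
have r10 : 0 < r1 by case: h1.
have r20 : 0 < r2 by case: h2.
case: (leP r2 r1) => r21.
  exists r1; split => //; apply: (um_lt hu) hxy _; apply: lt_le_trans hyz _.
  by rewrite ler_pM2r.
exists r2; split.
  apply: (adm_shift (x := y)); last exact: h2.
  rewrite um_sym //; apply: lt_trans hxy _; apply: lt_trans (half_lt r10) r21.
apply: (um_lt hu) _ hyz; apply: lt_trans hxy _; by rewrite ltr_pM2r.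
Qed.

Lemma rel_nbhs x : exists2 r, 0 < r & forall y, d x y < r -> urel x y.
Proof.
have [r hr] := adm_ex x; exists (r / 2); first by case: hr => r0 _ _; rewrite divr_gt0.
by move=> y hy; exists r.
Qed.

Lemma class_avoid x : exists A, F A /\ forall z, urel x z -> ~ A z.
Proof.
pose E := [set r | admr x r].
have [r0 hr0] := adm_ex x.
have hE : E !=set0 by exists r0.
have hs : has_sup E by split => //; exists 1 => r [].
have rho0 : 0 < sup E.
  by apply: lt_le_trans (sup_ub hs hr0); case: hr0.
have [r1 [r10 _ [A [FA hA]]] hr1] := sup_gt hE (half_lt rho0).
exists A; split => // z [r [hr hz]]; apply: hA; apply: lt_trans hz _.
apply: le_lt_trans hr1; rewrite ler_pM2r //.
exact: sup_ub hs hr.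
Qed.

Lemma new_point (l : seq X) : exists x, forall y, y \in l -> ~ urel x y.
Proof.
have [A [FA hA]] : exists A, F A /\ forall y z, y \in l -> urel y z -> ~ A z.
  elim: l => [|a l [A [FA hA]]]; first by exists setT; split; [exact: filterT | ].
  have [B [FB hB]] := class_avoid a.
  exists (A `&` B); split; first exact: filterI.
  move=> y z; rewrite inE => /orP [/eqP -> | yl] h [Az Bz].
    exact: hB h Bz.
  exact: hA yl h Az.
apply: contrapT => H; have [z Az] := filter_ex FA.
apply: H; exists z => y yl hzy; apply: hA yl (rel_sym hzy) Az.
Qed.

Lemma pts N : exists s : seq X, [/\ uniq s, size s = N &
  forall x y, x \in s -> y \in s -> x <> y -> ~ urel x y].
Proof.
elim: N => [|N [s [us ss hs]]]; first by exists [::]; split.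
have [x hx] := new_point s.
exists (x :: s); split => /=; last 1 first.
- move=> a b; rewrite !inE => /orP [/eqP -> | ai] /orP [/eqP -> | bi] ab //.
  + exact: hx.
  + by move=> /rel_sym; apply: hx.
  + exact: hs.
- rewrite us andbT; apply/negP => xs; exact: hx xs (rel_refl x).
- by rewrite ss.
Qed.


Variable S : set R.
Variable u : nat -> R.
Hypothesis hS : range_set S.
Hypothesis huS : forall n, S (u n).
Hypothesis hud : forall n, u n.+1 < u n.
Hypothesis huc : u @ \oo --> (0 : R^o).

Lemma u_pos n : 0 < u n.
Proof. case: hS => _ h; exact: le_lt_trans (h _ (huS n.+1)) (hud n). Qed.

Lemma u_small r : 0 < r -> exists n, u n < r.
Proof.
move=> r0; have [N hN] := cvg0_small huc r0; exists N.
by have := hN N (leqnn N); rewrite ger0_norm // ltW // u_pos.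
Qed.

Definition phi (t : R) : R :=
  match pselect (exists n, u n <= t) with
  | left H => u (ex_minn H)
  | right _ => u 0
  end.

Lemma phi_spec t : 0 < t -> exists n, [/\ phi t = u n, u n <= t &
  forall m, u m <= t -> (n <= m)%N].
Proof.
move=> t0; rewrite /phi; case: pselect => [H|H]; last first.
  by exfalso; apply: H; have [n hn] := u_small t0; exists n; exact: ltW.
case: ex_minnP => n hn hmin; exists n; split => //.
Qed.

Lemma phi_pos t : 0 < t -> 0 < phi t.
Proof. by move=> /phi_spec [n [-> _ _]]; exact: u_pos. Qed.

Lemma phi_le t : 0 < t -> phi t <= t.
Proof. by move=> /phi_spec [n [-> ? _]]. Qed.

Lemma phi_le0 t : 0 < t -> phi t <= u 0.
Proof. by move=> /phi_spec [n [-> _ _]]; apply: sdec_le. Qed.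

Lemma phi_S t : 0 < t -> S (phi t).
Proof. by move=> /phi_spec [n [-> _ _]]. Qed.

Lemma phi_mono t t' : 0 < t -> t <= t' -> phi t <= phi t'.
Proof.
move=> t0 tt'; have t'0 := lt_le_trans t0 tt'.
have [n [-> hn _]] := phi_spec t0; have [n' [-> _ hm']] := phi_spec t'0.
apply: sdec_le => //; apply: hm'; exact: le_trans hn tt'.
Qed.

Lemma phi_lt t m : 0 < t -> phi t < u m -> t < u m.
Proof.
move=> t0; have [n [-> _ hm]] := phi_spec t0 => /(sdec_ltE hud) mn.
by rewrite ltNge; apply/negP => /hm; rewrite leqNgt mn.
Qed.

Definition e0 (x y : X) : R :=
  if x == y then 0 else if `[< urel x y >] then phi (d x y) else u 0.

Lemma d_pos x y : x <> y -> 0 < d x y.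
Proof. exact: um_gt0. Qed.

Lemma e0_ge0 x y : 0 <= e0 x y.
Proof.
rewrite /e0; case: eqP => // xy; case: asboolP => _; last exact: ltW (u_pos 0).
exact/ltW/phi_pos/d_pos.
Qed.

Lemma e0_le0 x y : e0 x y <= u 0.
Proof.
rewrite /e0; case: eqP => xy; first exact: ltW (u_pos 0).
by case: asboolP => _ //; apply/phi_le0/d_pos.
Qed.

Lemma e0_nrel x y : x <> y -> ~ urel x y -> e0 x y = u 0.
Proof. by move=> xy nr; rewrite /e0; case: eqP => // _; case: asboolP. Qed.

Lemma e0_rel x y : x <> y -> urel x y -> e0 x y = phi (d x y).
Proof. by move=> xy nr; rewrite /e0; case: eqP => // _; case: asboolP. Qed.

Lemma e0_xx x : e0 x x = 0.
Proof. by rewrite /e0 eqxx. Qed.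

Lemma e0_ult : is_ultrametric e0.
Proof.
apply: mk_ultrametric.
- exact: e0_ge0.
- move=> x y; split => [|->]; last exact: e0_xx.
  apply: contraPP => xy; apply/eqP; rewrite gt_eqF //.
  case: (pselect (urel x y)) => r; first by rewrite e0_rel //; apply/phi_pos/d_pos.
  by rewrite e0_nrel //; exact: u_pos.
- move=> x y; case: (pselect (x = y)) => [->//|xy].
  have yx : y <> x by move=> h; apply: xy.
  case: (pselect (urel x y)) => r.
    by rewrite !e0_rel //; [rewrite um_sym | apply: rel_sym].
  by rewrite !e0_nrel // => /rel_sym.
- move=> x y z; case: (pselect (x = y)) => [->|xy]; first by rewrite e0_xx le_max e0_ge0.
  case: (pselect (z = x)) => [->|zx]; first by rewrite e0_xx le_max lexx orbT.
  case: (pselect (z = y)) => [->|zy]; first by rewrite e0_xx le_max lexx.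
  have xz : x <> z by move=> h; apply: zx.
  case: (pselect (urel x z)) => rxz; last first.
    by rewrite (e0_nrel xz rxz) le_max e0_le0.
  case: (pselect (urel z y)) => rzy; last first.
    by rewrite (e0_nrel zy rzy) le_max e0_le0 orbT.
  rewrite (e0_rel xy (rel_trans rxz rzy)) (e0_rel xz rxz) (e0_rel zy rzy).
  have := um_max hu x y z; rewrite le_max => /orP [h|h].
    by rewrite le_max phi_mono // d_pos.
  by rewrite le_max (phi_mono (d_pos xy) h) orbT.
Qed.

Lemma e0_S : S_valued S e0.
Proof.
move=> x y; rewrite /e0; case: eqP => [_|xy]; first exact: hS.1.
case: asboolP => _ //.
exact/phi_S/d_pos.
Qed.

Lemma e0_gen : generates_topology e0.
Proof.
apply: (gen_transfer hg).
- move=> x r r0; have [a a0 ha] := rel_nbhs x.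
  exists (Num.min a r); first by rewrite lt_min a0 r0.
  move=> y; rewrite lt_min => /andP [hya hyr].
  case: (pselect (x = y)) => [->|xy]; first by rewrite e0_xx.
  rewrite e0_rel //; last exact: ha.
  exact: le_lt_trans (phi_le (d_pos xy)) hyr.
- move=> x r r0; have [m hm] := u_small r0; exists (u m); first exact: u_pos.
  move=> y; case: (pselect (x = y)) => [->|xy]; first by rewrite (um_xx hu) => _.
  case: (pselect (urel x y)) => rxy.
    rewrite e0_rel // => /(phi_lt (d_pos xy)) h; exact: lt_trans h hm.
  rewrite e0_nrel // => h; exfalso.
  by move: (le_lt_trans (sdec_le hud (leq0n m)) h); rewrite ltxx.
Qed.

End NC.

Lemma noncompact_not_dense (R : realType) (S : set R) (X : topologicalType) :
  range_set S -> countable_coinitiality S -> ultrametrizable R X ->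
  ~ compact [set: X] -> ~ @UD_dense_in_Ult R X S [set d | Ult S d /\ doubling d].
Proof.
move=> hS [u [huS [hud huc]]] [d [hu hg]] nc [_ hdense].
have [F [FF hF]] : exists F : set_system X, ProperFilter F /\ forall x, ~ cluster F x.
  apply: contrapT => H; apply: nc => F FF _; apply: contrapT => H2; apply: H.
  by exists F; split => // x cx; apply: H2; exists x.
pose e := e0 d F u.
have Ue : Ult S e.
  split; first exact: (e0_S hu F hS huS hud huc).
  split; first exact: (e0_ult hu F hS huS hud huc).
  exact: (e0_gen hu hg hF hS huS hud huc).
have u00 : 0 < u 0.
  case: hS => _ h; have /= h1 := h _ (huS 1%N); exact: le_lt_trans h1 (hud 0%N).
have [f [Uf [b [c [b0 [c1 hdb]]]]] hUD] := hdense e Ue (u 0) u00.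
have [eps [_ epsu hc]] := UD_lt hUD.
have [_ [huf _]] := Uf.
have fu : forall x y, x <> y -> ~ urel d F x y -> f x y = u 0.
  move=> x y xy nr; have [c1' c2'] := hc x y.
  have ex : e x y = u 0 := e0_nrel u xy nr.
  by rewrite ex in c1' c2'; apply: agree_gt c1' c2'.
pose N := maxn 2 (Num.Def.archi_bound c).
have [s [us ss hs]] := pts hu hg FF hF N.
have s1 : (1 < size s)%N by rewrite ss /N leq_max leqnn.
have hsep : sep f s = u 0.
  apply/eqP; rewrite eq_le; apply/andP; split.
    have [x [y [xs ys xy]]] := @two_pts R X s us s1.
    rewrite -(fu x y xy (hs x y xs ys xy)); apply: sep_le => //; exact: um_ge0.
  by apply: sep_ge => // x y xs ys xy; rewrite fu //; apply: hs.
have hdiam : diam f s = u 0.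
  apply/eqP; rewrite eq_le; apply/andP; split.
    apply: diam_le => [|x y xs ys]; first exact: ltW.
    case: (pselect (x = y)) => [->|xy]; first by rewrite (um_xx huf) ltW.
    by rewrite fu //; apply: hs.
  by rewrite -{1}hsep; apply: sep_le_diam => //; exact: um_ge0.
have := hdb s us s1; rewrite hdiam hsep divff ?gt_eqF // powR1 mulr1 ss.
apply/negP; rewrite -ltNge.
have c0 : 0 <= c by exact: le_trans ler01 c1.
apply: lt_le_trans (archi_boundP c0) _; rewrite ler_nat /N leq_max leqnn orbT //.
Qed.

Section Cover.
Variables (R : realType) (X : topologicalType).
Variable d : X -> X -> R.
Hypothesis hu : is_ultrametric d.
Hypothesis hg : generates_topology d.
Hypothesis hc : compact [set: X].

Lemma cover_list t : 0 < t -> exists L : seq X, forall x, exists2 c, c \in L & d x c < t.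
Proof.
move=> t0; apply: contrapT => H.
pose B (L : seq X) := [set x | forall c, c \in L -> ~ (d x c < t)].
have hB : forall L, B L !=set0.
  move=> L; apply: contrapT => H2; apply: H; exists L => x.
  apply: contrapT => H3; apply: H2; exists x => c cL hxc; apply: H3; by exists c.
have GF : Filter (filter_from setT B).
  apply: filter_fromT_filter; first by exists [::].
  move=> L1 L2; exists (L1 ++ L2) => x Bx; split => c cL; apply: Bx;
    by rewrite mem_cat cL ?orbT.
have GP : ProperFilter (filter_from setT B) by apply: filter_from_proper => L _; apply: hB.
have [p [_ cp]] := hc GP filterT.
have [z [Bz hz]] := cp _ _ (@in_filter_from _ _ setT B [:: p] I) (@uball_nbhs _ _ d p t hu hg t0).
apply: (Bz p); first by rewrite inE eqxx.
by rewrite um_sym.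
Qed.
End Cover.

Section Code.
Variables (R : realType) (X : topologicalType).
Variable S : set R.
Variable u : nat -> R.
Hypothesis hS : range_set S.
Hypothesis huS : forall n, S (u n).
Hypothesis hud : forall n, u n.+1 < u n.
Hypothesis huc : u @ \oo --> (0 : R^o).
Variable d : X -> X -> R.
Hypothesis hu : is_ultrametric d.
Hypothesis hg : generates_topology d.
Hypothesis hc : compact [set: X].

Lemma upos n : 0 < u n.
Proof. case: hS => _ h; have /= h1 := h _ (huS n.+1); exact: le_lt_trans h1 (hud n). Qed.

Lemma usmall r : 0 < r -> exists n, u n < r.
Proof.
move=> r0; have [N hN] := cvg0_small huc r0; exists N.
by have := hN N (leqnn N); rewrite ger0_norm // ltW // upos.
Qed.

Lemma Lex : exists L : nat -> seq X, forall m x, exists2 c, c \in L m & d x c < u m.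
Proof.
have [L hL] := choice (fun m => cover_list hu hg hc (upos m)).
by exists L.
Qed.

Variable L : nat -> seq X.
Hypothesis hL : forall m x, exists2 c, c \in L m & d x c < u m.

Definition Nm m := size (L m).
Definition idx m x := find (fun c => d x c < u m) (L m).

Lemma idx_lt m x : (idx m x < Nm m)%N.
Proof.
rewrite /idx /Nm -has_find; have [c cL hc'] := hL m x; apply/hasP; by exists c.
Qed.

Lemma idx_eqP m x y : idx m x = idx m y <-> d x y < u m.
Proof.
split => [h|h].
  pose c := nth x (L m) (idx m x).
  have hx : d x c < u m.
    by have := @nth_find _ x (fun c => d x c < u m) (L m); rewrite has_find; apply; exact: idx_lt.
  have hy : d y c < u m.
    rewrite /c h; have := @nth_find _ x (fun c => d y c < u m) (L m); rewrite has_find; apply.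
    exact: idx_lt.
  by apply: (um_lt hu) hx _; rewrite um_sym.
rewrite /idx; apply: eq_find => c; apply/idP/idP => hh; apply/(um_ball hu h) => //.
Qed.

Definition bits m x : seq bool := [seq idx m x == b | b <- iota 0 (Nm m).+1].

Lemma size_bits m x : size (bits m x) = (Nm m).+1.
Proof. by rewrite size_map size_iota. Qed.

Definition FL x K := flatten [seq bits m x | m <- iota 0 K].
Definition off K := sumn [seq (Nm m).+1 | m <- iota 0 K].

Lemma size_FL x K : size (FL x K) = off K.
Proof.
rewrite /FL /off size_flatten /shape -map_comp; congr sumn; apply: eq_map => m /=.
exact: size_bits.
Qed.

Lemma off_S K : off K.+1 = (off K + (Nm K).+1)%N.
Proof. by rewrite /off -addn1 iotaD map_cat sumn_cat /= addn0. Qed.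

Lemma FL_S x K : FL x K.+1 = FL x K ++ bits K x.
Proof. by rewrite /FL -addn1 iotaD map_cat flatten_cat /= cats0. Qed.

Lemma off_ge K : (K <= off K)%N.
Proof. elim: K => // K IH; rewrite off_S -addn1 leq_add //. Qed.

Lemma off_mono K1 K2 : (K1 <= K2)%N -> (off K1 <= off K2)%N.
Proof.
move=> /subnKC <-; elim: (K2 - K1)%N => [|n IH]; first by rewrite addn0.
by rewrite addnS off_S (leq_trans IH) // leq_addr.
Qed.

Lemma FL_prefix x K1 K2 p : (K1 <= K2)%N -> (p < off K1)%N ->
  nth false (FL x K2) p = nth false (FL x K1) p.
Proof.
move=> /subnKC <- hp; elim: (K2 - K1)%N => [|n IH]; first by rewrite addn0.
rewrite addnS FL_S nth_cat size_FL (leq_trans hp) //; last first.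
  by apply: off_mono; rewrite leq_addr.
Qed.

Definition code x p := nth false (FL x p.+1) p.

Lemma code_FL x K p : (p < off K)%N -> code x p = nth false (FL x K) p.
Proof.
move=> hp; rewrite /code.
have hp1 : (p < off p.+1)%N by apply: leq_trans (off_ge _).
rewrite -(@FL_prefix x p.+1 (maxn K p.+1)) ?leq_maxr //.
by rewrite (@FL_prefix x K (maxn K p.+1)) ?leq_maxl.
Qed.

Lemma code_level x M b : (b <= Nm M)%N -> code x (off M + b) = (idx M x == b).
Proof.
move=> hb; rewrite (@code_FL x M.+1); last by rewrite off_S ltn_add2l ltnS.
rewrite FL_S nth_cat size_FL ltnNge leq_addr /= addKn /bits.
by rewrite (nth_map 0%N) ?size_iota ?ltnS // nth_iota ?ltnS.
Qed.

Lemma code_eq_upto K x y : (forall m, (m < K)%N -> idx m x = idx m y) ->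
  forall p, (p < off K)%N -> code x p = code y p.
Proof.
move=> h p hp; rewrite !(code_FL _ hp); congr nth; rewrite /FL; congr flatten.
apply/eq_in_map => m; rewrite mem_iota add0n => /h.
by rewrite /bits => ->.
Qed.

Lemma code_diff x y : x <> y -> exists p, code x p != code y p.
Proof.
move=> xy; have [m hm] := usmall (um_gt0 hu xy).
have ne : idx m x <> idx m y.
  move=> /idx_eqP h; move: (lt_trans h hm); by rewrite ltxx.
have hle : (idx m x <= Nm m)%N by exact: ltnW (idx_lt _ _).
exists (off m + idx m x)%N; rewrite !code_level // eqxx.
have -> : (idx m y == idx m x) = false by apply/eqP => h; apply: ne; rewrite h.
by [].
Qed.

Definition fd x y : nat :=
  match pselect (exists p, code x p != code y p) with
  | left H => ex_minn H
  | right _ => 0%N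
  end.

Lemma fd_spec x y : x <> y -> code x (fd x y) != code y (fd x y) /\
  (forall q, (q < fd x y)%N -> code x q = code y q) /\
  (forall q, code x q != code y q -> (fd x y <= q)%N).
Proof.
move=> xy; rewrite /fd; case: pselect => [H|H]; last by exfalso; apply: H; exact: code_diff.
case: ex_minnP => n hn hmin; split => //; split => // q qn.
by apply/eqP; apply: contraTT qn => /hmin; rewrite -leqNgt.
Qed.

Lemma fd_sym x y : x <> y -> fd x y = fd y x.
Proof.
move=> xy; have yx : y <> x by move=> h; apply: xy.
have [a1 [a2 a3]] := fd_spec xy; have [b1 [b2 b3]] := fd_spec yx.
apply/eqP; rewrite eqn_leq a3 1?eq_sym // b3 // eq_sym //.
Qed.

Lemma fd_ult x y z : x <> y -> x <> z -> z <> y ->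
  (minn (fd x z) (fd z y) <= fd x y)%N.
Proof.
move=> xy xz zy; have [a1 [a2 a3]] := fd_spec xy.
have [b1 [b2 b3]] := fd_spec xz; have [c1 [c2 c3]] := fd_spec zy.
rewrite leqNgt; apply/negP => h; move: a1; rewrite b2 ?c2 ?eqxx //.
  by apply: leq_trans h (geq_minr _ _).
by apply: leq_trans h (geq_minl _ _).
Qed.

Lemma fd_ge x y K : x <> y -> (forall q, (q < K)%N -> code x q = code y q) -> (K <= fd x y)%N.
Proof.
move=> xy h; have [a1 [a2 a3]] := fd_spec xy; rewrite leqNgt; apply/negP => /h.
by move/eqP: a1.
Qed.

Lemma hex : exists h : nat -> nat, forall n, (n < h n)%N /\ u (h n) <= u n / 2.
Proof.
have H : forall n, exists m, (n < m)%N /\ u m <= u n / 2.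
  move=> n; have [m0 hm0] := usmall (divr_gt0 (upos n) (ltr0Sn R 1)).
  exists (maxn m0 n.+1); split; first by rewrite leq_max leqnn orbT.
  exact: le_trans (sdec_le hud (leq_maxl _ _)) (ltW hm0).
have [h hh] := choice H; by exists h.
Qed.

Variable hf : nat -> nat.
Hypothesis hhf : forall n, (n < hf n)%N /\ u (hf n) <= u n / 2.
Variable p0 : nat.

Definition sq k := u (iter k hf p0).

Lemma sq_S k : S (sq k). Proof. exact: huS. Qed.
Lemma sq_pos k : 0 < sq k. Proof. exact: upos. Qed.
Lemma sq_half k : sq k.+1 <= sq k / 2. Proof. by rewrite /sq iterS; case: (hhf (iter k hf p0)). Qed.
Lemma sq_dec k : sq k.+1 < sq k.
Proof.
apply: le_lt_trans (sq_half k) _; rewrite ltr_pdivrMr // ltr_pMr ?ltr1n //; exact: sq_pos.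
Qed.
Lemma iter_ge k : (k <= iter k hf p0)%N.
Proof. elim: k => // k IH; rewrite iterS; apply: leq_ltn_trans IH _; by case: (hhf (iter k hf p0)). Qed.
Lemma sq_small r : 0 < r -> exists k, sq k < r.
Proof.
move=> r0; have [k hk] := usmall r0; exists k; apply: le_lt_trans hk.
rewrite /sq; apply: (sdec_le hud); exact: iter_ge.
Qed.
Lemma sq_pow i n : sq (i + n) * 2 ^+ n <= sq i.
Proof.
elim: n => [|n IH]; first by rewrite addn0 expr0 mulr1.
apply: le_trans IH; rewrite addnS exprS mulrA ler_pM2r ?exprn_gt0 //.
by rewrite -ler_pdivlMr // sq_half.
Qed.

Definition eps := u p0.
Lemma sq0 : sq 0 = eps. Proof. by []. Qed.

Definition e1 x y : R := if x == y then 0 else sq (fd x y).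

Lemma e1_le x y : e1 x y <= eps.
Proof.
rewrite /e1; case: eqP => _; first exact: ltW (upos p0).
by rewrite -sq0; exact: (sdec_le sq_dec (leq0n _)).
Qed.

Lemma e1_ge0 x y : 0 <= e1 x y.
Proof. by rewrite /e1; case: eqP => _ //; exact: ltW (sq_pos _). Qed.

Lemma e1_neq x y : x <> y -> e1 x y = sq (fd x y).
Proof. by rewrite /e1; case: eqP. Qed.

Lemma e1_xx x : e1 x x = 0.
Proof. by rewrite /e1 eqxx. Qed.

Lemma e1_ult x y z : e1 x y <= Num.max (e1 x z) (e1 z y).
Proof.
case: (pselect (x = y)) => [->|xy]; first by rewrite e1_xx le_max e1_ge0.
case: (pselect (x = z)) => [<-|xz]; first by rewrite e1_xx le_max lexx orbT.
case: (pselect (z = y)) => [->|zy]; first by rewrite e1_xx le_max lexx.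
rewrite !e1_neq //.
have := fd_ult xy xz zy.
rewrite geq_min => /orP [h|h].
  by rewrite le_max (sdec_le sq_dec h).
by rewrite le_max (sdec_le sq_dec h) orbT.
Qed.

Definition e2 x y : R := if d x y < eps then e1 x y else d x y.


Lemma e2_lt x y : d x y < eps -> e2 x y = e1 x y.
Proof. by rewrite /e2 => ->. Qed.
Lemma e2_ge x y : ~ (d x y < eps) -> e2 x y = d x y.
Proof. by rewrite /e2 => /negP /negbTE ->. Qed.

Lemma e2_ge0 x y : 0 <= e2 x y.
Proof. rewrite /e2; case: ifP => _; [exact: e1_ge0 | exact: um_ge0]. Qed.

Lemma e2_ult : is_ultrametric e2.
Proof.
apply: mk_ultrametric.
- exact: e2_ge0.
- move=> x y; split => [|->]; last first.
    by rewrite e2_lt ?e1_xx // um_xx // upos.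
  apply: contraPP => xy; apply/eqP; rewrite gt_eqF //.
  case: (pselect (d x y < eps)) => h.
    by rewrite e2_lt // e1_neq //; exact: sq_pos.
  by rewrite e2_ge //; exact: um_gt0.
- move=> x y; rewrite /e2 (um_sym hu y x); case: ifP => _; last by [].
  case: (pselect (x = y)) => [->|xy]; first by [].
  have yx : y <> x by move=> h; apply: xy.
  by rewrite (e1_neq xy) (e1_neq yx) (fd_sym xy).
- move=> x y z; case: (pselect (d x y < eps)) => hxy; last first.
    rewrite (e2_ge hxy); have := um_max hu x y z; rewrite le_max => /orP [h|h].
      have hxz : ~ (d x z < eps).
        by move=> h2; apply: hxy; exact: le_lt_trans h h2.
      by rewrite (e2_ge hxz) le_max h.
    have hzy : ~ (d z y < eps).
      by move=> h2; apply: hxy; exact: le_lt_trans h h2.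
    by rewrite (e2_ge hzy) le_max h orbT.
  rewrite (e2_lt hxy).
  case: (pselect (d x z < eps)) => hxz; last first.
    rewrite (e2_ge hxz) le_max; apply/orP; left; apply: le_trans (e1_le x y) _.
    by rewrite leNgt; apply/negP.
  case: (pselect (d z y < eps)) => hzy; last first.
    rewrite (e2_ge hzy) le_max; apply/orP; right; apply: le_trans (e1_le x y) _.
    by rewrite leNgt; apply/negP.
  by rewrite (e2_lt hxz) (e2_lt hzy) e1_ult.
Qed.

Hypothesis hdS : S_valued S d.

Lemma e2_S : S_valued S e2.
Proof.
move=> x y; rewrite /e2; case: ifP => _ //; rewrite /e1; case: eqP => _.
  exact: hS.1.
exact: sq_S.
Qed.

Lemma e2_UD : UDcond d e2 eps.
Proof.
move=> x y; case: (pselect (d x y < eps)) => h.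
  rewrite e2_lt //; split; rewrite le_max; apply/orP; right.
    exact: ltW.
  exact: e1_le.
by rewrite e2_ge //; split; rewrite le_max lexx.
Qed.


Lemma e2_gen : generates_topology e2.
Proof.
apply: (gen_transfer hg).
- move=> x r r0; have [k hk] := sq_small r0.
  exists (Num.min (u k) eps); first by rewrite lt_min !upos.
  move=> y; rewrite lt_min => /andP [h1 h2]; rewrite e2_lt //.
  case: (pselect (x = y)) => [->|xy]; first by rewrite e1_xx.
  rewrite e1_neq //.
  have fdk : (off k <= fd x y)%N.
    apply: fd_ge xy _; apply: code_eq_upto => m mk; apply/idx_eqP.
    apply: lt_le_trans h1 _; apply: (sdec_le hud); exact: ltnW.
  apply: le_lt_trans hk; apply: (sdec_le sq_dec); exact: leq_trans (off_ge k) fdk.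
- move=> x r r0; have [M hM] := usmall r0.
  pose q := (off M + Nm M)%N.
  exists (Num.min eps (sq q)); first by rewrite lt_min upos sq_pos.
  move=> y; rewrite lt_min => /andP [h1 h2].
  case: (pselect (x = y)) => [->|xy]; first by rewrite um_xx.
  have hd : d x y < eps.
    apply: contrapT => hn; have h3 := e2_ge hn; apply: hn; by rewrite -h3.
  rewrite e2_lt // e1_neq // in h2.
  have qf : (q < fd x y)%N := sdec_ltE sq_dec h2.
  have hle : (idx M x <= Nm M)%N by exact: ltnW (idx_lt _ _).
  have := (fd_spec xy).2.1 (off M + idx M x)%N (leq_ltn_trans _ qf).
  rewrite leq_add2l => /(_ hle); rewrite !code_level // eqxx => /esym/eqP h.
  apply: lt_trans hM; apply/idx_eqP; by rewrite h.
Qed.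


Lemma e2_pos x y : x <> y -> 0 < e2 x y.
Proof. by move=> xy; have := @um_gt0 R X e2 e2_ult x y; apply. Qed.

Lemma same_block x y : x <> y -> idx p0 x = idx p0 y -> e2 x y = sq (fd x y).
Proof. by move=> xy /idx_eqP h; rewrite e2_lt // e1_neq. Qed.

Lemma e2_dbl : doubling e2.
Proof.
exists 1, (2 * (Nm p0).+1%:R); split => //; split.
  by rewrite -natrM ler1n muln_gt0.
move=> s us ss.
pose dl := diam e2 s; pose sg := sep e2 s.
have sg0 : 0 < sg := sep_pos e2_pos us ss.
have sgdl : sg <= dl := sep_le_diam e2_ge0 us ss.
have dl0 : 0 < dl := lt_le_trans sg0 sgdl.
have exi : exists n, sq n <= dl by have [n hn] := sq_small dl0; exists n; exact: ltW.
have exj : exists n, sq n.+1 < sg by have [n hn] := sq_small sg0; exists n;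
  exact: lt_trans (sq_dec n) hn.
have [i hi1 hi2] : exists2 i, sq i <= dl & forall n, sq n <= dl -> (i <= n)%N.
  by case: (ex_minnP exi) => i h1 h2; exists i.
have [j hj1 hj2] : exists2 j, sq j.+1 < sg & forall n, sq n.+1 < sg -> (j <= n)%N.
  by case: (ex_minnP exj) => j h1 h2; exists j.
have key : forall x y, x \in s -> y \in s -> x <> y -> idx p0 x = idx p0 y ->
    (i <= fd x y <= j)%N.
  move=> x y xs ys xy hb; have he := same_block xy hb.
  apply/andP; split.
    by apply: hi2; rewrite -he; exact: diam_ge.
  rewrite leqNgt; apply/negP => jf.
  have : sg <= sq (fd x y) by rewrite -he; apply: sep_le => //; exact: e2_ge0.
  move=> hsg; have := le_lt_trans hsg (le_lt_trans (sdec_le sq_dec jf) hj1).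
  by rewrite ltxx.
pose n := (j.+1 - i)%N.
pose Phi (x : X) := ((inord (idx p0 x) : 'I_(Nm p0).+1), [tuple code x (i + k) | k < n]).
have inj : {in s &, injective Phi}.
  move=> x y xs ys h; apply: contrapT => xy.
  have hb : idx p0 x = idx p0 y.
    move: (congr1 (fun p => val p.1) h); rewrite /= !inordK // ltnS ltnW //; exact: idx_lt.
  have /andP [ifd fdj] := key x y xs ys xy hb.
  have kn : (fd x y - i < n)%N by rewrite /n; lia.
  have := congr1 (fun p => tnth p.2 (Ordinal kn)) h; rewrite /= !tnth_mktuple /= subnKC //.
  by move=> /eqP; apply/negP; exact: (fd_spec xy).1.
have hsize : (size s <= (Nm p0).+1 * 2 ^ n)%N.
  have <- : size (map Phi s) = size s by rewrite size_map.
  have um : uniq (map Phi s) by rewrite map_inj_in_uniq.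
  have := max_card (mem (map Phi s)); rewrite (card_uniqP um).
  by rewrite card_prod card_ord card_tuple card_bool.
have hpow : (2 ^+ n : R) <= 2 * (dl / sg).
  rewrite /n; case: (leqP i j) => ij; last first.
    have -> : (j.+1 - i = 0)%N by apply/eqP; rewrite subn_eq0.
    have r1 : 1 <= dl / sg by rewrite ler_pdivlMr // mul1r.
    rewrite expr0; apply: le_trans r1 _.
    by rewrite -{1}(mul1r (dl / sg)) ler_pM2r ?ler1n // divr_gt0.
  rewrite subSn // exprS ler_pM2l // ler_pdivlMr //.
  case: (posnP j) => [j0 | jpos].
    have i0 : i = 0%N by apply/eqP; rewrite -leqn0 -j0.
    by rewrite j0 i0 subnn expr0 mul1r.
  have sgj : sg <= sq j.
    rewrite leNgt; apply/negP => h; have := hj2 j.-1; rewrite prednK // => /(_ h).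
    by rewrite leqNgt ltn_predL jpos.
  apply: le_trans hi1; apply: le_trans (sq_pow i (j - i)).
  by rewrite subnKC // mulrC ler_pM2r ?exprn_gt0.
rewrite -/dl -/sg powRr1; last by apply: divr_ge0; apply: ltW.
apply: le_trans (_ : _ <= ((Nm p0).+1 * 2 ^ n)%:R) _; first by rewrite ler_nat.
rewrite natrM natrX [2 * _]mulrC -mulrA ler_pM2l //.
Qed.

End Code.

Lemma compact_dense (R : realType) (S : set R) (X : topologicalType) :
  range_set S -> countable_coinitiality S -> compact [set: X] ->
  @UD_dense_in_Ult R X S [set d | Ult S d /\ doubling d].
Proof.
move=> hS [u [huS [hud huc]]] hc; split; first by move=> d [].
move=> d [hdS [hu hg]] r r0.
have [L hL] := Lex hS huS hud hu hg hc.
have [hf hhf] := hex hS huS hud huc.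
have [p0 hp0] := usmall hS huS hud huc r0.
exists (e2 u d L hf p0).
  split; last exact: (e2_dbl hS huS hud huc hu hL hhf p0).
  split; first exact: (e2_S hS huS L hf p0 hdS).
  split; first exact: (e2_ult hS huS hud huc hu hL hhf p0).
  exact: (e2_gen hS huS hud huc hu hg hL hhf p0).
apply: le_lt_trans (UD_le (huS p0) _) _; first exact: (e2_UD hS huS hud d L hhf p0).
by rewrite lte_fin.
Qed.

Unset Implicit Arguments.

Theorem theorem1p3 (R : realType) (S : set R) (X : topologicalType) :
  range_set S -> countable_coinitiality S -> ultrametrizable R X ->
  (compact [set: X] <->
   (@UD_dense_in_Ult R X S [set d | Ult S d /\ doubling d] /\
    @UD_Fsigma_in_Ult R X S [set d | Ult S d /\ doubling d])).
Proof.
move=> hS hco hum; split.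
  move=> hc; split; first exact: compact_dense.
  exact: Fsigma_all.
move=> [hd _]; apply: contrapT => nc.
exact: noncompact_not_dense hS hco hum nc hd.
Qed.
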